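(* Suppose the index set $\{1,\dots,q\}$ is partitioned into disjoint nonempty cliques $V_1,\dots,V_J$ with $v_g=|V_g|$, and let $\tilde\beta$ be a minimizer over $b\in\mathbb R^q$ of $$G(b;\lambda_2)=\frac1{2n}\|y-Xb\|^2+\frac12\lambda_2\sum_{g=1}^J b_g'(I_{v_g}-v_g^{-1}\mathbf 1_g\mathbf 1_g')b_g,$$ where $\lambda_2\ge0$, $b_g=(b_j)_{j\in V_g}$ and $\mathbf 1_g$ is the all-ones vector of length $v_g$. Let $\bar\beta_g=v_g^{-1}\sum_{j\in V_g}\tilde\beta_j$. Then (i) for any $1\le g\le J$ and $j,k\in V_g$: $\lambda_2|\tilde\beta_j-\tilde\beta_k|\le\frac1n\|x_j-x_k\|\,\|y\|$; (ii) for any $g\neq h$, $j\in V_g$, $k\in V_h$: $\lambda_2|\tilde\beta_j-\bar\beta_g-(\tilde\beta_k-\bar\beta_h)|\le\frac1n\|x_j-x_k\|\,\|y\|$.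
   Context: $y\in\mathbb R^n$, $X=(x_1,\dots,x_q)\in\mathbb R^{n\times q}$ a real design matrix. The penalty is the quadratic form of the normalized Laplacian $L=I_q-A$ with block-diagonal $A=\operatorname{diag}(A_1,\dots,A_J)$, $A_g=v_g^{-1}\mathbf 1_g\mathbf 1_g'$ (after ordering indices by cliques). *)

(* Defs.v *)
From HB Require Import structures.
From mathcomp Require Import all_boot all_order all_algebra.
Set Implicit Arguments. Unset Strict Implicit. Unset Printing Implicit Defensive.
Import Order.TTheory GRing.Theory Num.Theory.
Local Open Scope ring_scope.

Definition vnorm (R : rcfType) (n : nat) (v : 'cV[R]_n) : R :=
  Num.sqrt (\sum_(i < n) v i 0 ^+ 2).

(* The cliques are given by a labelling cl : 'I_q -> 'I_J ; V_g = {j | cl j = g}. *)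
Definition clique_size (q J : nat) (cl : 'I_q -> 'I_J) (g : 'I_J) : nat :=
  #|[set j | cl j == g]|.

Definition cliqueA (R : rcfType) (q J : nat) (cl : 'I_q -> 'I_J) : 'M[R]_q :=
  \matrix_(j < q, k < q)
    (if cl j == cl k then ((clique_size cl (cl j))%:R)^-1 else 0).

Definition cliqueL (R : rcfType) (q J : nat) (cl : 'I_q -> 'I_J) : 'M[R]_q :=
  1%:M - cliqueA R cl.

Definition objG (R : rcfType) (n q J : nat) (cl : 'I_q -> 'I_J)
    (y : 'cV[R]_n) (X : 'M[R]_(n, q)) (lambda2 : R) (b : 'cV[R]_q) : R :=
  (2 * n%:R)^-1 * vnorm (y - X *m b) ^+ 2
  + 2^-1 * lambda2 * (b^T *m cliqueL R cl *m b) 0 0.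

Definition clique_mean (R : rcfType) (q J : nat) (cl : 'I_q -> 'I_J)
    (beta : 'cV[R]_q) (g : 'I_J) : R :=
  ((clique_size cl g)%:R)^-1 * \sum_(j < q | cl j == g) beta j 0.

(* Main.v *)
Require Import Defs.
From HB Require Import structures.
From mathcomp Require Import all_boot all_order all_algebra.
From mathcomp Require Import ring lra.
Import Order.TTheory GRing.Theory Num.Theory.
Set Implicit Arguments. Unset Strict Implicit. Unset Printing Implicit Defensive.
Local Open Scope ring_scope.

Section H.
Variable R : rcfType.

Definition dot {m : nat} (u v : 'cV[R]_m) : R := (u^T *m v) 0 0.

Lemma dotE m (u v : 'cV[R]_m) : dot u v = \sum_(i < m) u i 0 * v i 0.
Proof. by rewrite /dot mxE; apply: eq_bigr => i _; rewrite mxE. Qed.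

Lemma dotC m (u v : 'cV[R]_m) : dot u v = dot v u.
Proof. by rewrite !dotE; apply: eq_bigr => i _; rewrite mulrC. Qed.

Lemma dot_ge0 m (u : 'cV[R]_m) : 0 <= dot u u.
Proof. by rewrite dotE; apply: sumr_ge0 => i _; rewrite -expr2 sqr_ge0. Qed.

Lemma vnorm2 m (u : 'cV[R]_m) : vnorm u ^+ 2 = dot u u.
Proof.
rewrite /vnorm sqr_sqrtr; last by apply: sumr_ge0 => i _; rewrite sqr_ge0.
by rewrite dotE; apply: eq_bigr => i _; rewrite expr2.
Qed.

Lemma vnorm_ge0 m (u : 'cV[R]_m) : 0 <= vnorm u.
Proof. exact: sqrtr_ge0. Qed.

Lemma quad_zero (a c : R) : (forall t, 0 <= a * t ^+ 2 + c * t) -> c = 0.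
Proof.
move=> H; have := H (- c / (`|a| + 1)).
have hp : 0 < `|a| + 1 by rewrite ltr_wpDl.
set s := `|a| + 1 in hp *.
have ha : a <= `|a| := ler_norm a.
have -> : a * (- c / s) ^+ 2 + c * (- c / s) = c ^+ 2 * (a - s) / s ^+ 2.
  by field; rewrite gt_eqF.
rewrite pmulr_lge0 ?invr_gt0 ?exprn_gt0 //.
rewrite /s => h.
have : c ^+ 2 <= 0 by nra.
nra.
Qed.

Lemma dotDl m (u v w : 'cV[R]_m) : dot (u + v) w = dot u w + dot v w.
Proof. by rewrite /dot linearD mulmxDl mxE. Qed.
Lemma dotZl m (a : R) (u w : 'cV[R]_m) : dot (a *: u) w = a * dot u w.
Proof. by rewrite /dot linearZ -scalemxAl mxE. Qed.
Lemma dotNl m (u w : 'cV[R]_m) : dot (- u) w = - dot u w.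
Proof. by rewrite -scaleN1r dotZl mulN1r. Qed.
Lemma dotDr m (u v w : 'cV[R]_m) : dot w (u + v) = dot w u + dot w v.
Proof. by rewrite dotC dotDl !(dotC w). Qed.
Lemma dotZr m (a : R) (u w : 'cV[R]_m) : dot w (a *: u) = a * dot w u.
Proof. by rewrite dotC dotZl dotC. Qed.
Lemma dotNr m (u w : 'cV[R]_m) : dot w (- u) = - dot w u.
Proof. by rewrite dotC dotNl dotC. Qed.

Definition Bm {m} (M : 'M[R]_m) (u v : 'cV[R]_m) : R := (u^T *m M *m v) 0 0.
Lemma BmDl m M (u v w : 'cV[R]_m) : Bm M (u + v) w = Bm M u w + Bm M v w.
Proof. by rewrite /Bm linearD !mulmxDl mxE. Qed.
Lemma BmDr m M (u v w : 'cV[R]_m) : Bm M w (u + v) = Bm M w u + Bm M w v.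
Proof. by rewrite /Bm mulmxDr mxE. Qed.
Lemma BmZl m M (a : R) (u w : 'cV[R]_m) : Bm M (a *: u) w = a * Bm M u w.
Proof. by rewrite /Bm linearZ -!scalemxAl mxE. Qed.
Lemma BmZr m M (a : R) (u w : 'cV[R]_m) : Bm M w (a *: u) = a * Bm M w u.
Proof. by rewrite /Bm -!scalemxAr mxE. Qed.


Section FOC.
Variables (n q J : nat) (cl : 'I_q -> 'I_J) (y : 'cV[R]_n) (X : 'M[R]_(n, q)) (l : R).
Variable hn : (0 < n)%N.

Lemma objG_exp (b d : 'cV[R]_q) (t : R) :
  objG cl y X l (b + t *: d) = objG cl y X l b
    + t * (l / 2 * (Bm (cliqueL R cl) d b + Bm (cliqueL R cl) b d)
           - n%:R^-1 * dot (X *m d) (y - X *m b))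
    + t ^+ 2 * ((2 * n%:R)^-1 * dot (X *m d) (X *m d) + 2^-1 * l * Bm (cliqueL R cl) d d).
Proof.
rewrite /objG !vnorm2 -/(Bm _ _ _) -/(Bm _ (b + t *: d) _).
rewrite mulmxDr -scalemxAr.
have -> : y - (X *m b + t *: (X *m d)) = (y - X *m b) + (- t) *: (X *m d).
  by rewrite scaleNr opprD addrA.
rewrite !(dotDl, dotDr, dotZl, dotZr, BmDl, BmDr, BmZl, BmZr).
rewrite (dotC y (X *m d)) (dotC (- (X *m b)) (X *m d)) -/(Bm _ b b).
rewrite invfM; field. all: rewrite ?pnatr_eq0 -?lt0n //.
Qed.

Lemma foc (b d : 'cV[R]_q) :
  (forall b', objG cl y X l b <= objG cl y X l b') ->
  l / 2 * (Bm (cliqueL R cl) d b + Bm (cliqueL R cl) b d)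
           = n%:R^-1 * dot (X *m d) (y - X *m b).
Proof.
move=> hmin; apply/eqP; rewrite -subr_eq0; apply/eqP.
apply: (@quad_zero ((2 * n%:R)^-1 * dot (X *m d) (X *m d) + 2^-1 * l * Bm (cliqueL R cl) d d)).
move=> t; have := hmin (b + t *: d); rewrite objG_exp => h.
rewrite -subr_ge0 in h; move: h.
set A := objG _ _ _ _ b. set a := (_ + _ * Bm _ d d).
set c := (l / 2 * _ - _). move=> h.
have -> : a * t ^+ 2 + c * t = A + t * c + t ^+ 2 * a - A by ring.
exact: h.
Qed.
End FOC.

Lemma BmC m (M : 'M[R]_m) u v : M^T = M -> Bm M u v = Bm M v u.
Proof.
move=> hM; have h : (u^T *m M *m v)^T 0 0 = (u^T *m M *m v) 0 0 by rewrite mxE.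
by rewrite /Bm -h !trmx_mul trmxK hM mulmxA.
Qed.

Lemma cliqueL_sym q J (cl : 'I_q -> 'I_J) : (cliqueL R cl)^T = cliqueL R cl.
Proof.
apply/matrixP => i j; rewrite /cliqueL !mxE.
rewrite (eq_sym j i) (eq_sym (cl j)); case: eqP => [->|_] //; by case: eqP => [->|].
Qed.


Lemma Lb_entry q J (cl : 'I_q -> 'I_J) (b : 'cV[R]_q) (j : 'I_q) :
  (cliqueL R cl *m b) j 0 = b j 0 - clique_mean cl b (cl j).
Proof.
rewrite /cliqueL mulmxBl mul1mx mxE /clique_mean mulr_sumr big_mkcond /=.
rewrite mxE; congr (_ - _); rewrite mxE; apply: eq_bigr => k _; rewrite !mxE eq_sym.
by case: ifP => _; rewrite ?mul0r.
Qed.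

Lemma BmE m (M : 'M[R]_m) u v : Bm M u v = dot u (M *m v).
Proof. by rewrite /Bm /dot mulmxA. Qed.

Lemma dot_delta m (j : 'I_m) (v : 'cV[R]_m) : dot (delta_mx j 0) v = v j 0.
Proof. by rewrite /dot trmx_delta -rowE mxE. Qed.

Lemma Bm_d q J (cl : 'I_q -> 'I_J) (b : 'cV[R]_q) (j k : 'I_q) :
  Bm (cliqueL R cl) (delta_mx j 0 - delta_mx k 0) b
  = (b j 0 - clique_mean cl b (cl j)) - (b k 0 - clique_mean cl b (cl k)).
Proof.
by rewrite BmE -scaleN1r dotDl dotZl !dot_delta !Lb_entry mulN1r.
Qed.

Lemma Xd n q (X : 'M[R]_(n, q)) (j k : 'I_q) :
  X *m (delta_mx j 0 - delta_mx k 0) = col j X - col k X.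
Proof. by rewrite mulmxBr -!colE. Qed.

Lemma psd q J (cl : 'I_q -> 'I_J) (hne : forall g : 'I_J, exists j : 'I_q, cl j = g)
  (b : 'cV[R]_q) : 0 <= Bm (cliqueL R cl) b b.
Proof.
rewrite BmE dotE.
set m := clique_mean cl b.
have -> : \sum_(i < q) b i 0 * (cliqueL R cl *m b) i 0 =
   \sum_(i < q) (b i 0 - m (cl i)) ^+ 2 + \sum_(i < q) m (cl i) * (b i 0 - m (cl i)).
  rewrite -big_split /=; apply: eq_bigr => i _; rewrite Lb_entry -/m; ring.
have -> : \sum_(i < q) m (cl i) * (b i 0 - m (cl i)) = 0.
  rewrite (partition_big cl predT) //=; apply: big1 => g _.
  rewrite (eq_bigr (fun i => m g * (b i 0 - m g))); last by move=> i /eqP ->.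
  rewrite -mulr_sumr sumrB.
  have -> : \sum_(i < q | cl i == g) m g = \sum_(i in [set i | cl i == g]) m g.
    by apply: eq_bigl => i; rewrite inE.
  rewrite sumr_const -/(clique_size cl g) -mulr_natl /m /clique_mean.
  have hs : (clique_size cl g)%:R != 0 :> R.
    rewrite pnatr_eq0 -lt0n; apply/card_gt0P; have [j hj] := hne g.
    by exists j; rewrite inE hj.
  by rewrite mulrA mulfV // mul1r subrr mulr0.
rewrite addr0; apply: sumr_ge0 => i _; exact: sqr_ge0.
Qed.

Lemma disc (a b c : R) : 0 <= c -> (forall t, 0 <= a - 2 * t * b + t ^+ 2 * c) ->
  b ^+ 2 <= a * c.
Proof.
move=> hc H; have ha := H 0.
have [c0|cp] := eqVneq c 0.
  rewrite c0 mulr0; have [b0|bn] := eqVneq b 0; first by rewrite b0 expr0n.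
  have := H ((a + 1) / (2 * b)); rewrite c0 mulr0 addr0.
  have -> : a - 2 * ((a + 1) / (2 * b)) * b = - 1 by field.
  by rewrite oppr_ge0 ler10.
have := H (b / c).
have -> : a - 2 * (b / c) * b + (b / c) ^+ 2 * c = (a * c - b ^+ 2) / c by field.
have cpos : 0 < c by rewrite lt_def cp hc.
by rewrite pmulr_lge0 ?invr_gt0 // subr_ge0.
Qed.

Lemma cs m (u v : 'cV[R]_m) : `|dot u v| <= vnorm u * vnorm v.
Proof.
rewrite -(ler_pXn2r (n:=2)) ?nnegrE ?mulr_ge0 ?vnorm_ge0 //.
rewrite real_normK ?num_real // exprMn !vnorm2; apply: disc; first exact: dot_ge0.
move=> t; have := dot_ge0 (u - t *: v).
rewrite -scaleN1r !(dotDl, dotDr, dotZl, dotZr) (dotC v u).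
by move=> h; lra.
Qed.
End H.

Theorem proposition2 (R : rcfType) (n q J : nat) (hn : (0 < n)%N)
    (y : 'cV[R]_n) (X : 'M[R]_(n, q)) (cl : 'I_q -> 'I_J)
    (hne : forall g : 'I_J, exists j : 'I_q, cl j = g)
    (lambda2 : R) (hl : 0 <= lambda2) (beta : 'cV[R]_q)
    (hmin : forall b : 'cV[R]_q, objG cl y X lambda2 beta <= objG cl y X lambda2 b) :
  (forall j k : 'I_q, cl j = cl k ->
     lambda2 * `|beta j 0 - beta k 0|
       <= n%:R^-1 * vnorm (col j X - col k X) * vnorm y)
  /\
  (forall j k : 'I_q, cl j <> cl k ->
     lambda2 * `|beta j 0 - clique_mean cl beta (cl j)
                 - (beta k 0 - clique_mean cl beta (cl k))|
       <= n%:R^-1 * vnorm (col j X - col k X) * vnorm y).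
Proof.
have npos : 0 < n%:R :> R by rewrite ltr0n.
have hr : vnorm (y - X *m beta) <= vnorm y.
  rewrite -(ler_pXn2r (n:=2)) ?nnegrE ?vnorm_ge0 //.
  have := hmin 0; rewrite /objG mulmx0 subr0 trmx0 !mul0mx (_ : (0 : 'M[R]_1) 0 0 = 0); last by rewrite mxE.
  rewrite mulr0 addr0.
  rewrite -/(Bm _ beta beta).
  have := psd hne beta => hp h.
  have h2 : (2 * n%:R)^-1 * vnorm (y - X *m beta) ^+ 2 <= (2 * n%:R)^-1 * vnorm y ^+ 2.
    have : 0 <= 2^-1 * lambda2 * Bm (cliqueL R cl) beta beta.
      by rewrite mulr_ge0 // mulr_ge0 // invr_ge0 ler0n.
    move=> h3; lra.
  by rewrite ler_pM2l ?invr_gt0 ?mulr_gt0 ?ltr0n // in h2.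
have key : forall j k : 'I_q,
   lambda2 * `|beta j 0 - clique_mean cl beta (cl j)
                 - (beta k 0 - clique_mean cl beta (cl k))|
       <= n%:R^-1 * vnorm (col j X - col k X) * vnorm y.
  move=> j k.
  have := foc hn (delta_mx j 0 - delta_mx k 0) hmin.
  rewrite [Bm _ beta _]BmC ?cliqueL_sym // Bm_d Xd => h.
  rewrite -{1}(ger0_norm hl) -normrM.
  have -> : lambda2 * (beta j 0 - clique_mean cl beta (cl j)
                 - (beta k 0 - clique_mean cl beta (cl k)))
     = n%:R^-1 * dot (col j X - col k X) (y - X *m beta).
    by rewrite -h; field.
  rewrite normrM ger0_norm ?invr_ge0 ?ler0n // -mulrA ler_pM2l ?invr_gt0 //.
  apply: le_trans; first exact: cs.
  by apply: ler_wpM2l; [exact: vnorm_ge0 | exact: hr].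
split => // j k hjk.
have := key j k; rewrite hjk.
by have -> : beta j 0 - clique_mean cl beta (cl k) - (beta k 0 - clique_mean cl beta (cl k)) = beta j 0 - beta k 0 by ring.
Qed.
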